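(* Let $\mathcal{C}'$ be an $[N,k]$ MDS code over a finite field $\mathbb{F}_q$ and let $G'=[a'_{i,j}]$ ($1\le i\le k$, $1\le j\le N$) be a generator matrix of $\mathcal{C}'$. Let $n$ be the order of the (cyclic) multiplicative subgroup of $\mathbb{F}_q^\times$ generated by all non-zero entries of $G'$, and let $\zeta_n'\in\mathbb{F}_q$ be a generator of this subgroup (a primitive $n$-th root of unity), so that every non-zero entry can be written as $a'_{i,j}=(\zeta_n')^{e_{i,j}}$ with $e_{i,j}$ an integer, unique modulo $n$. Let $\zeta_n=e^{2\pi i/n}\in\mathbb{C}$ and $K=\mathbb{Q}(\zeta_n)$. Define the $k\times N$ matrix $G=[a_{i,j}]$ over $K$ by $a_{i,j}=0$ if $a'_{i,j}=0$ and $a_{i,j}=\zeta_n^{e_{i,j}}$ if $a'_{i,j}=(\zeta_n')^{e_{i,j}}$. Then the code $\mathcal{C}\subseteq K^N$ generated by $G$ is an $[N,k]$ MDS code over $K$.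
   Context: A linear $[N,k]$ code over a field $F$ is a $k$-dimensional subspace of $F^N$; it is MDS if its minimum Hamming distance equals $N-k+1$, equivalently every $k\times k$ submatrix (choice of $k$ columns) of a $k\times N$ generator matrix is non-singular. *)

(* Defs.v *)
From HB Require Import structures.
From mathcomp Require Import all_boot all_order all_algebra all_fingroup all_field.
From mathcomp Require Import all_classical all_reals all_analysis.
From mathcomp Require Import complex.

Set Implicit Arguments.
Unset Strict Implicit.
Unset Printing Implicit Defensive.

Import GRing.Theory Num.Theory.
Local Open Scope ring_scope.

(* A k x N matrix G over a field F generates an [N,k] MDS code:
   the code it generates has dimension k (G has rank k), and every choice
   of k distinct columns of G gives a non-singular k x k submatrix. *)
Definition MDS_generator (F : fieldType) (k N : nat) (G : 'M[F]_(k, N)) : Prop :=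
  \rank G = k /\
  forall f : 'I_k -> 'I_N, injective f -> \det (colsub f G) != 0.

Definition nonzero_entries (F : finFieldType) (k N : nat) (A : 'M[F]_(k, N))
  : {set {unit F}} :=
  [set u : {unit F} | [exists i, exists j, FinRing.uval u == A i j]].

Definition zeta (R : realType) (n : nat) : R[i] :=
  (cos (2 * pi / n%:R) +i* sin (2 * pi / n%:R))%C.

Definition lift_matrix (F : fieldType) (R : realType) (k N n : nat)
  (A' : 'M[F]_(k, N)) (e : 'I_k -> 'I_N -> int) : 'M[R[i]]_(k, N) :=
  \matrix_(i < k, j < N) (if A' i j == 0 then 0 else zeta R n ^ (e i j)).

(* Main.v *)
Require Import Defs.
From HB Require Import structures.
From mathcomp Require Import all_boot all_order all_algebra all_fingroup all_field.
From mathcomp Require Import all_classical all_reals all_analysis.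
From mathcomp Require Import complex.
From mathcomp Require Import ring lra.
Import GRing.Theory Num.Theory.
Local Open Scope ring_scope.
Set Implicit Arguments.
Unset Strict Implicit.
Lemma zetaX (R : realType) (n m : nat) :
  zeta R n ^+ m = (cos (m%:R * (2 * pi / n%:R)) +i* sin (m%:R * (2 * pi / n%:R)))%C.
Proof.
set t := 2 * pi / n%:R.
elim: m => [|m IH]; first by rewrite expr0 !mul0r cos0 sin0.
rewrite exprSr IH /zeta -/t.
rewrite -addn1 natrD mulrDl mul1r cosD sinD.
apply/eqP; rewrite eq_complex /=; apply/andP; split; apply/eqP; ring.
Qed.
Lemma zeta_prim (R : realType) (n : nat) : (0 < n)%N -> n.-primitive_root (zeta R n).
Proof.
move=> n0; rewrite /primitive_root_of_unity n0 /=; apply/forallP => i.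
have nR : (n%:R : R) != 0 by rewrite pnatr_eq0 -lt0n.
rewrite unity_rootE.
case: (i.+1 =P n) => [e|/eqP ne]; rewrite zetaX.
  rewrite e.
  have -> : n%:R * (2 * pi / n%:R) = pi *+ 2 :> R by rewrite -mulr_natl; field.
  rewrite cos2pi sin2pi.
  by rewrite eqxx.
have ltin : (i.+1 < n)%N by rewrite ltn_neqAle ne ltn_ord.
rewrite eqbF_neg; apply/eqP => /(congr1 (@complex.Re R)) /=.
pose y : R := i.+1%:R * pi / n%:R.
have -> : i.+1%:R * (2 * pi / n%:R) = y + y by rewrite /y; field.
rewrite cosD => h.
have : 0 < sin y.
  apply: sin_gt0_pi; apply/andP; split.
    by rewrite /y divr_gt0 ?mulr_gt0 ?pi_gt0 ?ltr0n.
  rewrite /y ltr_pdivrMr ?ltr0n // mulrC ltr_pM2l ?pi_gt0 //.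
  by rewrite ltr_nat.
move=> hs; have h2 := cos2Dsin2 y.
rewrite expr2 in h2; nra.
Qed.
Lemma Phi_root (L : idomainType) (n : nat) (w : L) :
  n.-primitive_root w -> root (map_poly intr 'Phi_n) w.
Proof.
move=> pw; have n0 := prim_order_gt0 pw.
have ev d : (0 < d)%N -> \prod_(d' <- divisors d) (map_poly intr 'Phi_d').[w] = w ^+ d - 1.
  move=> d0; rewrite -horner_prod -rmorph_prod /= prod_Cyclotomic //.
  by rewrite rmorphB /= rmorph1 map_polyXn hornerD hornerN hornerXn hornerC.
have := ev n n0; rewrite (prim_expr_order pw) subrr => /eqP.
rewrite prodf_seq_eq0 => /hasP [d]; rewrite -dvdn_divisors // => dn /= /eqP rd.
have d0 : (0 < d)%N by apply: dvdn_gt0 dn.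
have [e|ne] := eqVneq d n; first by rewrite -e; apply/eqP.
have : w ^+ d - 1 = 0.
  rewrite -ev // (big_rem d) /=; last by rewrite -dvdn_divisors.
  by rewrite rd mul0r.
move/eqP; rewrite subr_eq0 -(prim_order_dvd pw) => nd.
by move: ne; rewrite eqn_dvd nd dn.
Qed.
Lemma mapQL (L : numFieldType) (p : {poly int}) :
  map_poly (ratr : rat -> L) (map_poly intr p) = map_poly intr p.
Proof. by rewrite -map_poly_comp; apply: eq_map_poly => x /=; rewrite ratr_int. Qed.

Lemma Phi_dvd (L : numFieldType) (n : nat) (w : L) (P : {poly int}) :
  (0 < n)%N -> root (map_poly intr 'Phi_n) w -> root (map_poly intr P) w ->
  map_poly (intr : int -> rat) 'Phi_n %| map_poly intr P.
Proof.
move=> n0 rPhi rP.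
set Phi := map_poly (intr : int -> rat) 'Phi_n.
set Q := map_poly (intr : int -> rat) P.
have [cop|ncop] := boolP (coprimep Q Phi).
  have [[u v] /= /eqpP [[c1 c2] /= /andP [c10 c20] E]] := Bezout_coprimepP _ _ cop.
  have := congr1 (fun p => (map_poly (ratr : rat -> L) p).[w]) E => /=.
  rewrite !map_polyZ !rmorphD !rmorphM /= !mapQL !hornerZ hornerD !hornerM.
  rewrite (eqP rPhi) (eqP rP) !mulr0 addr0 mulr0 rmorph1 hornerC mulr1.
  by move/esym/eqP; rewrite fmorph_eq0 (negbTE c20).
pose g := gcdp Q Phi.
have monPhi : Phi \is monic by apply: monic_map; apply: Cyclotomic_monic.
have Phi0 : Phi != 0 by apply: monic_neq0.
have sg : size (map_poly (ratr : rat -> algC) g) != 1%N.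
  by rewrite size_map_poly.
have [w' rw'] := closed_rootP _ sg.
have rPhiw' : root (map_poly (ratr : rat -> algC) Phi) w'.
  by apply: root_dvdp rw'; rewrite dvdp_map dvdp_gcdr.
have [z0 pz0] := C_prim_root_exists n0.
have EPhi : map_poly (ratr : rat -> algC) Phi = cyclotomic z0 n.
  by rewrite mapQL (Cintr_Cyclotomic pz0).
have pw' : n.-primitive_root w'.
  by rewrite -(root_cyclotomic pz0) -EPhi.
have [p [Dp _] Hp] := minCpolyP w'.
have pE : p = Phi.
  apply: (map_inj_poly (fmorph_inj (ratr : {rmorphism rat -> algC}))); first exact: rmorph0.
  apply: (@etrans _ _ (minCpoly w')); first exact: (esym Dp).
  by rewrite (minCpoly_cyclotomic pw') -(Cintr_Cyclotomic pw') (Cintr_Cyclotomic pz0) -EPhi.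
rewrite -pE -Hp.
by apply: root_dvdp rw'; rewrite dvdp_map dvdp_gcdl.
Qed.

Lemma transfer (L : numFieldType) (K : idomainType) (n : nat) (w : L) (v : K)
  (P : {poly int}) : (0 < n)%N ->
  root (map_poly intr 'Phi_n) w -> root (map_poly intr 'Phi_n) v ->
  root (map_poly intr P) w -> root (map_poly intr P) v.
Proof.
move=> n0 rw rv rP.
have monP := Cyclotomic_monic n.
have E := Pdiv.IdomainMonic.divp_eq monP P.
set q := P %/ 'Phi_n in E; set r := P %% 'Phi_n in E.
have rrw : root (map_poly intr r) w.
  move: rP; rewrite {1}E rmorphD rmorphM /= rootE !hornerE (eqP rw) mulr0 add0r.
  by [].
have dv := Phi_dvd n0 rw rrw.
have r0 : r = 0.
  have szm (p : {poly int}) : size (map_poly (intr : int -> rat) p) = size p.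
    by apply: size_map_inj_poly; [exact: intr_inj | exact: rmorph0].
  apply/eqP; apply: contraLR dv => nz; apply/negP => /dvdp_leq.
  rewrite -size_poly_eq0 szm size_poly_eq0 => /(_ nz).
  by rewrite !szm leqNgt Pdiv.Idomain.ltn_modp monic_neq0.
move: E; rewrite r0 addr0 => ->.
by rewrite rmorphM /= rootE hornerM (eqP rv) mulr0.
Qed.

Lemma prim_of_dvd (T : nzRingType) (n : nat) (x : T) : (0 < n)%N ->
  (forall i, (x ^+ i == 1) = (n %| i)%N) -> n.-primitive_root x.
Proof.
move=> n0 H; rewrite /primitive_root_of_unity n0 /=; apply/forallP => i.
rewrite unity_rootE H; apply/eqP.
case: (i.+1 =P n) => [->|/eqP ne]; first exact: dvdnn.
apply/negbTE; apply/negP => /(dvdn_leq (ltn0Sn i)).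
by rewrite leqNgt ltn_neqAle ne ltn_ord.
Qed.

Lemma expz_mod (T : unitRingType) (x : T) (n : nat) (e : int) :
  x \is a GRing.unit -> x ^+ n = 1 -> (0 < n)%N -> x ^ e = x ^+ `|(e %% n)%Z|%N.
Proof.
move=> ux xn n0.
have h : (e %% n)%Z = Posz `|(e %% n)%Z|%N.
  by rewrite gez0_abs // modz_ge0 // lt0n_neq0.
rewrite {1}(divz_eq e n) exprzDr // mulrC -exprz_exp.
have -> : x ^ (Posz n) = 1 by exact: xn.
by rewrite exp1rz mul1r h.
Qed.

Lemma det_poly (K : comUnitRingType) (k N n : nat) (F : fieldType) (A' : 'M[F]_(k, N))
  (e : 'I_k -> 'I_N -> int) (f : 'I_k -> 'I_N) (x : K) :
  let M := \matrix_(i, j) (if A' i (f j) == 0 then 0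
                          else 'X^`|(e i (f j) %% n)%Z|%N) : 'M[{poly int}]_k in
  \det (\matrix_(i, j) (if A' i (f j) == 0 then 0 else x ^+ `|(e i (f j) %% n)%Z|%N))
  = (map_poly intr (\det M)).[x].
Proof.
move=> M.
transitivity (\det (map_mx (horner_eval x) (map_mx (map_poly (intr : int -> K)) M))).
  congr (\det _); apply/matrixP => i j.
  rewrite !mxE; case: ifP => _; first by rewrite rmorph0 /horner_eval horner0.
  by rewrite map_polyXn /= /horner_eval hornerXn.
rewrite (det_map_mx (horner_eval x)).
by rewrite (det_map_mx (map_poly (intr : int -> K))).
Qed.

Unset Implicit Arguments.
Set Strict Implicit.

Theorem mainTheorem1 (F : finFieldType) (R : realType) (k N : nat)
  (A' : 'M[F]_(k, N)) (z : {unit F}) (n : nat) (e : 'I_k -> 'I_N -> int) :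
  MDS_generator A' ->
  (<<nonzero_entries A'>> = <[z]>)%g ->
  n = #[z]%g ->
  (forall i j, A' i j != 0 -> A' i j = (FinRing.uval z) ^ (e i j)) ->
  MDS_generator (lift_matrix R n A' e).
Proof.
move=> [rk MDS] _ nE Hz.
have n0 : (0 < n)%N by rewrite nE order_gt0.
set v := FinRing.uval z.
have pv : n.-primitive_root v.
  apply: (@prim_of_dvd F n v n0) => i.
  by rewrite nE cyclic.order_dvdn /v -FinRing.val_unitX -FinRing.val_unit1 val_eqE.
have pw := zeta_prim R n0.
have uv : v \is a GRing.unit by rewrite unitfE; apply/eqP => v0;
  move: (prim_expr_order pv); rewrite v0 expr0n eqn0Ngt n0 /= => /eqP; rewrite eq_sym oner_eq0.
have uw : zeta R n \is a GRing.unit by rewrite unitfE; apply/eqP => v0;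
  move: (prim_expr_order pw); rewrite v0 expr0n eqn0Ngt n0 /= => /eqP; rewrite eq_sym oner_eq0.
have detne : forall f : 'I_k -> 'I_N, injective f ->
    \det (colsub f (lift_matrix R n A' e)) != 0.
  move=> f injf; have := MDS f injf; apply: contra => /eqP d0.
  have E1 : colsub f (lift_matrix R n A' e) =
     \matrix_(i, j) (if A' i (f j) == 0 then 0
                     else zeta R n ^+ `|(e i (f j) %% n)%Z|%N).
    apply/matrixP => i j; rewrite !mxE; case: ifP => // _.
    by rewrite (expz_mod _ uw (prim_expr_order pw) n0).
  have E2 : colsub f A' =
     \matrix_(i, j) (if A' i (f j) == 0 then 0 else v ^+ `|(e i (f j) %% n)%Z|%N).
    apply/matrixP => i j; rewrite !mxE; case: ifP => [/eqP //|/negbT nz].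
    by rewrite (Hz _ _ nz) (expz_mod _ uv (prim_expr_order pv) n0).
  rewrite E1 det_poly in d0; rewrite E2 det_poly; apply/eqP.
  apply/eqP; apply: (transfer n0 (Phi_root pw) (Phi_root pv)).
  by apply/eqP.
split=> //.
have kN : (k <= N)%N by rewrite -rk rank_leq_col.
have injf : injective (widen_ord kN) by move=> a b /(congr1 val) /= /val_inj.
have := detne _ injf.
set G := lift_matrix R n A' e => dG.
have rc : \rank (colsub (widen_ord kN) G) = k.
  by apply: mxrank_unit; rewrite unitmxE unitfE.
apply/eqP; rewrite eqn_leq rank_leq_row /= -{1}rc.
have -> : colsub (widen_ord kN) G = G *m colsub (widen_ord kN) 1%:M.
  have rG : rowsub id G = G by apply/matrixP => i j; rewrite mxE.
  by rewrite -[X in X *m _]rG -mxsub_mul mulmx1.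
exact: mxrankM_maxl.
Qed.
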